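(* Let $K\subseteq\mathbb{R}$ be a field that is an algebraic extension of $\mathbb{Q}$, and let $K^+=\{x\in K:x>0\}$. Then $K^+$ cannot be written as $H_1\sqcup H_2$ with $H_1,H_2$ disjoint nonempty subsets, each closed under addition and multiplication. *)

(* Defs.v *)
From HB Require Import structures.
From mathcomp Require Import all_boot all_order all_algebra.
From mathcomp Require Import reals.
Set Implicit Arguments. Unset Strict Implicit. Unset Printing Implicit Defensive.
Import Order.TTheory GRing.Theory Num.Theory.
Local Open Scope ring_scope.

Definition is_subfield (R : realType) (K : R -> Prop) : Prop :=
  K 0 /\ K 1 /\
  (forall x y, K x -> K y -> K (x + y)) /\
  (forall x, K x -> K (- x)) /\
  (forall x y, K x -> K y -> K (x * y)) /\
  (forall x, K x -> x != 0 -> K x^-1).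

Definition algebraic_over_Q (R : realType) (x : R) : Prop :=
  exists p : {poly rat}, p != 0 /\ root (map_poly ratr p) x.

Definition pos_part (R : realType) (K : R -> Prop) (x : R) : Prop := K x /\ 0 < x.

Definition semiring_closed_set (R : realType) (H : R -> Prop) : Prop :=
  (forall x y, H x -> H y -> H (x + y)) /\ (forall x y, H x -> H y -> H (x * y)).

(* Main.v *)
Require Import Defs.
From HB Require Import structures.
From mathcomp Require Import all_boot all_order all_algebra.
From mathcomp Require Import reals.
From mathcomp Require Import ring lra.
From Stdlib Require Import Classical.
Import Order.TTheory GRing.Theory Num.Theory.
Local Open Scope ring_scope.

Lemma alg_rel (R : realType) (x : R) : x != 0 -> algebraic_over_Q x ->
  exists (a : nat -> rat) (n : nat), (0 < n)%N /\ a 0%N != 0 /\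
    \sum_(i < n) ratr (a i) * x ^+ i = 0 /\
    \sum_(i < n) ratr (a i) * i%:R * x ^+ i.-1 != 0.
Proof.
move=> x0 [p [p0 rp]].
move: {2}(size p) (leqnn (size p)) => m; elim: m p p0 rp => [|m IH] p p0 rp hs.
  by move: p0; rewrite -size_poly_gt0; rewrite leqn0 in hs; rewrite (eqP hs).
have sumE : \sum_(i < size p) ratr p`_i * x ^+ i = 0.
  transitivity (map_poly ratr p).[x]; last exact/eqP.
  rewrite horner_coef size_map_poly.
  by apply: eq_bigr => i _; rewrite coef_map.
case: (eqVneq p`_0 0) => [c0|c0].
  have : root p 0 by rewrite /root horner_coef0 c0.
  case/factor_theorem => q pq; rewrite subr0 in pq.
  have q0 : q != 0 by apply: contraNneq p0 => q0; rewrite pq q0 mul0r.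
  apply: (IH q q0).
    move: rp; rewrite pq /root rmorphM /= map_polyX hornerMX mulf_eq0 (negPf x0) orbF.
    by [].
  by move: hs; rewrite pq size_mulX.
have sp1 : (1 < size p)%N.
  case: (ltngtP (size p) 1) => // [|s1].
    by rewrite ltnS leqn0 size_poly_eq0 (negPf p0).
  move: rp; rewrite /root (size1_polyC (eq_leq s1)) map_polyC hornerC /=.
  by rewrite fmorph_eq0 (negPf c0).
case: (eqVneq (\sum_(i < size p) ratr p`_i * i%:R * x ^+ i.-1) 0) => [d0|d0]; last first.
  by exists (fun i => p`_i), (size p); split => //; apply: ltnW.
have hc : p^`()`_(size p).-2 != 0.
  rewrite coef_deriv.
  have e : (size p).-2.+1 = (size p).-1 by case: (size p) sp1 => [|[|k]].
  rewrite e mulrn_eq0 negb_or -lead_coefE lead_coef_eq0 p0 andbT.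
  by rewrite -lt0n -(ltn_add2r 1) !addn1 prednK // ltnW.
have dp0 : p^`() != 0.
  apply: contraNneq hc => ->; by rewrite coef0.
apply: (IH _ dp0); last first.
  by rewrite -ltnS; apply: leq_trans hs; apply: lt_size_deriv.
rewrite /root (horner_coef_wide _ (_ : size _ <= (size p).-1)%N); last first.
  by rewrite size_map_poly -ltnS prednK ?lt_size_deriv // ltnW.
apply/eqP; rewrite -[RHS]d0 -(prednK (ltnW sp1)) big_ord_recl /= mulr0 mul0r add0r.
apply: eq_bigr => i _; rewrite coef_map coef_deriv /=.
by rewrite rmorphMn /= mulr_natr.
Qed.

Section Main.
Variable R : realType.
Variable K : R -> Prop.
Hypothesis HK : is_subfield K.
Variables H1 H2 : R -> Prop.
Hypothesis disj : forall x, H1 x -> H2 x -> False.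
Hypothesis cover : forall x, pos_part K x <-> (H1 x \/ H2 x).
Hypothesis sc1 : semiring_closed_set H1.
Hypothesis sc2 : semiring_closed_set H2.
Hypothesis one1 : H1 1.

Lemma K0 : K 0. Proof. by case: HK. Qed.
Lemma K1 : K 1. Proof. by case: HK => _ []. Qed.
Lemma KD {x y} : K x -> K y -> K (x + y).
Proof. by case: HK => _ [_ [h _]]; apply: h. Qed.
Lemma KN {x} : K x -> K (- x).
Proof. by case: HK => _ [_ [_ [h _]]]; apply: h. Qed.
Lemma KM {x y} : K x -> K y -> K (x * y).
Proof. by case: HK => _ [_ [_ [_ [h _]]]]; apply: h. Qed.
Lemma KV {x} : K x -> x != 0 -> K x^-1.
Proof. by case: HK => _ [_ [_ [_ [_ h]]]]; apply: h. Qed.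
Lemma KB {x y} : K x -> K y -> K (x - y).
Proof. by move=> kx ky; apply: KD => //; apply: KN. Qed.
Lemma Kn n : K n%:R.
Proof. by elim: n => [|n IH]; [exact: K0 | rewrite mulrS; apply: KD => //; exact: K1]. Qed.
Lemma Kz (z : int) : K z%:~R.
Proof. by case: z => n; [exact: Kn | rewrite NegzE mulrNz; apply: KN; exact: Kn]. Qed.
Lemma Kq (q : rat) : K (ratr q).
Proof.
rewrite -[q]divq_num_den fmorph_div /= !ratr_int.
case: (eqVneq ((denq q)%:~R : R) 0) => [->|d0]; first by rewrite invr0 mulr0; exact: K0.
by apply: KM; [exact: Kz | apply: KV => //; exact: Kz].
Qed.
Lemma KX {x} n : K x -> K (x ^+ n).
Proof. by move=> kx; elim: n => [|n IH]; [exact: K1 | rewrite exprS; apply: KM]. Qed.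

Lemma H1K {x} : H1 x -> K x /\ 0 < x.
Proof. by move=> h; have [] := (proj2 (cover x)) (or_introl h). Qed.
Lemma H2K {x} : H2 x -> K x /\ 0 < x.
Proof. by move=> h; have [] := (proj2 (cover x)) (or_intror h). Qed.
Lemma classify x : K x -> 0 < x -> H1 x \/ H2 x.
Proof. by move=> kx px; apply/cover. Qed.
Lemma H1D {x y} : H1 x -> H1 y -> H1 (x + y). Proof. exact: sc1.1. Qed.
Lemma H1M {x y} : H1 x -> H1 y -> H1 (x * y). Proof. exact: sc1.2. Qed.
Lemma H2D {x y} : H2 x -> H2 y -> H2 (x + y). Proof. exact: sc2.1. Qed.
Lemma H2M {x y} : H2 x -> H2 y -> H2 (x * y). Proof. exact: sc2.2. Qed.

Lemma natH {A : R -> Prop} (hA : forall x y, A x -> A y -> A (x + y)) y n :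
  A y -> A (y *+ n.+1).
Proof. by move=> ay; elim: n => [|n IH]; [rewrite mulr1n | rewrite mulrS; apply: hA]. Qed.

Lemma ratpos (q : rat) : 0 < q -> exists a b : nat,
  (0 < a)%N /\ (0 < b)%N /\ ratr q * b%:R = a%:R :> R.
Proof.
move=> q0; have := numqE q; have := denq_gt0 q; have := q0; rewrite -numq_gt0.
case: (numq q) => [a|a] //; case: (denq q) => [b|b] // a0 b0 e.
exists a, b; split => //; split => //.
have := congr1 (@ratr R) e; rewrite rmorphM /= !ratr_int -!pmulrn => ->.
by [].
Qed.

Lemma scale_gen (A B : R -> Prop) (AB : forall x, A x -> B x -> False)
  (cov : forall x, K x -> 0 < x -> A x \/ B x)
  (addA : forall x y, A x -> A y -> A (x + y))
  (addB : forall x y, B x -> B y -> B (x + y))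
  (posA : forall x, A x -> K x /\ 0 < x) y (q : rat) :
  A y -> 0 < q -> A (ratr q * y).
Proof.
move=> ay q0; have [ky y0] := posA _ ay.
have kz : K (ratr q * y) by apply: KM => //; exact: Kq.
have z0 : 0 < ratr q * y by rewrite mulr_gt0 // ltr0q.
case: (cov _ kz z0) => // bz. have [a [b [a0 [b0 e]]]] := ratpos q q0.
case: a a0 e => // a _ e; case: b b0 e => // b _ e.
exfalso; apply: (AB (y *+ a.+1)); first exact: natH.
have := natH addB _ b bz; rewrite -mulr_natr mulrAC e mulr_natl.
by [].
Qed.

Lemma scale1 {y} {q : rat} : H1 y -> 0 < q -> H1 (ratr q * y).
Proof. exact: (scale_gen H1 H2 disj classify (@H1D) (@H2D) (@H1K)). Qed.
Lemma scale2 {y} {q : rat} : H2 y -> 0 < q -> H2 (ratr q * y).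
Proof.
apply: (scale_gen H2 H1 _ _ (@H2D) (@H1D) (@H2K)).
  by move=> x a b; exact: disj b a.
by move=> x kx px; case: (classify _ kx px); [right|left].
Qed.
Lemma Q1 {q : rat} : 0 < q -> H1 (ratr q).
Proof. by move=> q0; rewrite -[ratr q]mulr1; exact: scale1. Qed.
Lemma Hn1 n : H1 n.+1%:R.
Proof. exact: natH (@H1D) 1 n one1. Qed.

Lemma R2 {h} {q : rat} : H2 h -> 0 < q -> ratr q < h -> H2 (h - ratr q).
Proof.
move=> h2 q0 qh; have [kh h0] := H2K h2.
have := @classify (h - ratr q) (KB kh (Kq q)); rewrite subr_gt0 => /(_ qh) [] //.
  move=> h1; exfalso; apply: (disj _ _ h2).
  by rewrite -(subrK (ratr q) h); apply: H1D => //; exact: Q1.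
Qed.

Lemma R4 {h} {q : rat} : H2 h -> h < ratr q -> H1 (ratr q - h).
Proof.
move=> h2 qh; have [kh h0] := H2K h2.
have q0 : 0 < q by rewrite -(ltr0q R); apply: lt_trans qh.
have := @classify (ratr q - h) (KB (Kq q) kh); rewrite subr_gt0 => /(_ qh) [] //.
move=> h2'; exfalso; apply: (disj _ (Q1 q0)).
by rewrite -(subrK h (ratr q)) addrC; apply: H2D.
Qed.

Lemma H2X {h} n : H2 h -> H2 (h ^+ n.+1).
Proof. by move=> h2; elim: n => [|n IH]; [rewrite expr1 | rewrite exprS; apply: H2M]. Qed.


Definition S s := H2 s /\ H1 (1 + s).

Lemma S_add a b : S a -> S b -> S (a + b).
Proof.
move=> [a2 a1] [b2 b1]; split; first exact: H2D.
have [ka a0] := H2K a2; have [kb b0] := H2K b2.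
have kc : K (1 + (a + b)) by apply: KD; [exact: K1 | exact: KD].
have c0 : 0 < 1 + (a + b) by rewrite addr_gt0 // addr_gt0.
case: (classify _ kc c0) => // c2; exfalso.
apply: (disj _ (H1M a1 b1)).
have -> : (1 + a) * (1 + b) = 1 + (a + b) + a * b by ring.
by apply: H2D => //; apply: H2M.
Qed.

Lemma S_mul a b : S a -> S b -> S (a * b).
Proof.
move=> [a2 a1] [b2 b1]; split; first exact: H2M.
have [ka a0] := H2K a2; have [kb b0] := H2K b2.
have kc : K (1 + a * b) by apply: KD; [exact: K1 | exact: KM].
have c0 : 0 < 1 + a * b by rewrite addr_gt0 // mulr_gt0.
case: (classify _ kc c0) => // c2; exfalso.
apply: (disj _ (H1M a1 b1)).
have -> : (1 + a) * (1 + b) = 1 + a * b + (a + b) by ring.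
by apply: H2D => //; apply: H2D.
Qed.

Lemma S_nat a n : S a -> S (a *+ n.+1).
Proof. exact: (@natH S S_add a n). Qed.

Lemma S_pow a n : S a -> S (a ^+ n.+1).
Proof. by move=> sa; elim: n => [|n IH]; [rewrite expr1 | rewrite exprS; apply: S_mul]. Qed.

Lemma S_scale a (q : rat) : S a -> 0 < q -> S (ratr q * a).
Proof.
move=> sa q0; have [a2 a1] := sa; split; first exact: scale2.
have [ka a0] := H2K a2.
have kc : K (1 + ratr q * a) by apply: KD; [exact: K1 | apply: KM => //; exact: Kq].
have c0 : 0 < 1 + ratr q * a by rewrite addr_gt0 // mulr_gt0 // ltr0q.
case: (classify _ kc c0) => // c2; exfalso.
have [na [nb [na0 [nb0 e]]]] := ratpos q q0.
case: na na0 e => // na _ e; case: nb nb0 e => // nb _ e.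
have h := natH (@H2D) _ nb c2.
have ez : (ratr q * a) *+ nb.+1 = a *+ na.+1 by rewrite -mulr_natr mulrAC e mulr_natl.
move: h; rewrite mulrnDl ez mulrS => h.
have h1 : H1 (1 + a *+ na.+1) by have [] := S_nat _ na sa.
clear e ez; case: nb h => [|nb] h.
  by apply: (disj _ h1); rewrite mulr0n addr0 in h.
apply: (disj _ _ h).
have -> : 1 + nb.+1%:R + a *+ na.+1 = (1 + a *+ na.+1) + nb.+1%:R by ring.
by apply: H1D => //; exact: Hn1.
Qed.

Lemma S_split h (b : nat -> rat) m : S h -> exists s1 s2,
  (s1 = 0 \/ S s1) /\ (s2 = 0 \/ S s2) /\
  \sum_(i < m) ratr (b i) * h ^+ i.+1 = s1 - s2.
Proof.
move=> sh; elim: m => [|m [s1 [s2 [h1 [h2 e]]]]].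
  by exists 0, 0; rewrite big_ord0 subr0; split; [left|split; [left|]].
rewrite big_ord_recr /= e.
case: (ltgtP (b m) 0) => [bn|bp|->].
- exists s1, (s2 + ratr (- b m) * h ^+ m.+1); split => //; split; last first.
    by rewrite rmorphN /=; ring.
  right; have t : S (ratr (- b m) * h ^+ m.+1).
    by apply: S_scale; [exact: S_pow | rewrite oppr_gt0].
  by case: h2 => [->|s2S]; [rewrite add0r | apply: S_add].
- exists (s1 + ratr (b m) * h ^+ m.+1), s2; split; last by split => //; ring.
  right; have t : S (ratr (b m) * h ^+ m.+1) by apply: S_scale => //; exact: S_pow.
  by case: h1 => [->|s1S]; [rewrite add0r | apply: S_add].
- by exists s1, s2; rewrite rmorph0 mul0r addr0.
Qed.

Lemma S_contra (c : rat) (s1 s2 : R) : 0 < c -> (s1 = 0 \/ S s1) -> (s2 = 0 \/ S s2) ->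
  s1 + ratr c = s2 -> False.
Proof.
move=> c0 h1 h2 e.
have s1ge : 0 <= s1 by case: h1 => [->|[/H2K [_ p] _]] //; exact: ltW.
have c0' : 0 < ratr c :> R by rewrite ltr0q.
case: h2 => [s20|[s2H _]].
  move: e; rewrite s20 => e; have : 0 < s1 + ratr c by rewrite addrC; exact: ltr_wpDr.
  by rewrite e ltxx.
apply: (disj _ _ s2H); rewrite -e.
case: h1 => [->|s1S]; first by rewrite add0r; exact: Q1.
have cn : ratr c != 0 :> R by rewrite lt0r_neq0.
have ci : 0 < c^-1 by rewrite invr_gt0.
have [_ hh] := S_scale _ _ s1S ci.
have := scale1 hh c0.
suff -> : ratr c * (1 + ratr c^-1 * s1) = s1 + ratr c by [].
by rewrite fmorphV /= mulrDr mulr1 mulrA mulfV // mul1r addrC.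
Qed.

Hypothesis Halg : forall x, K x -> algebraic_over_Q x.

Lemma S_final h : H2 h -> H1 (1 + h) -> False.
Proof.
move=> h2 h1; have sh : S h by split.
have [kh h0] := H2K h2.
have [a [n [n0 [a0 [e _]]]]] := @alg_rel R h (lt0r_neq0 h0) (Halg _ kh).
case: n n0 e => // n _; rewrite big_ord_recl /= expr0 mulr1.
have [s1 [s2 [hs1 [hs2 ->]]]] := S_split h (fun i => a i.+1) n sh => e.
case: (ltgtP (a 0%N) 0) => [an|ap|a00]; last by rewrite a00 eqxx in a0.
- apply: (S_contra (- a 0%N) s2 s1) => //; first by rewrite oppr_gt0.
  by rewrite rmorphN /=; move: e; lra.
- apply: (S_contra (a 0%N) s1 s2) => //.
  by move: e; lra.
Qed.


Section TCase.
Hypothesis HT : forall h, H2 h -> H2 (1 + h).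

Lemma T_addq h (q : rat) : H2 h -> 0 < q -> H2 (ratr q + h).
Proof.
move=> h2 q0.
have h2' : H2 (ratr q^-1 * h) by apply: scale2; rewrite ?invr_gt0.
have qn : ratr q != 0 :> R by rewrite fmorph_eq0 lt0r_neq0.
suff -> : ratr q + h = ratr q * (1 + ratr q^-1 * h) by exact: scale2 (HT _ h2') q0.
by rewrite fmorphV /= mulrDr mulr1 mulrA mulfV // mul1r.
Qed.

Lemma shift2 {w : R} {c d : rat} : K w -> H2 (w + ratr c) -> 0 < w + ratr d ->
  H2 (w + ratr d).
Proof.
move=> kw h2 pd; have [_ pc] := H2K h2.
case: (ltgtP c d) => [cd|dc|e]; last by rewrite -e.
- have -> : w + ratr d = ratr (d - c) + (w + ratr c) by rewrite rmorphB /=; ring.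
  by apply: T_addq => //; rewrite subr_gt0.
- have -> : w + ratr d = (w + ratr c) - ratr (c - d) by rewrite rmorphB /=; ring.
  apply: R2 => //; first by rewrite subr_gt0.
  by rewrite rmorphB /=; lra.
Qed.

Lemma shift1 {w : R} {c d : rat} : K w -> H1 (w + ratr c) -> 0 < w + ratr d ->
  H1 (w + ratr d).
Proof.
move=> kw h1 pd; have [_ pc] := H1K h1.
case: (classify _ (KD kw (Kq d)) pd) => // h2.
by exfalso; apply: (disj _ h1); exact: (shift2 kw h2 pc).
Qed.

Definition P2 (w : R) := K w /\ exists c : rat, H2 (w + ratr c).
Definition P1 (w : R) := K w /\ exists c : rat, H1 (w + ratr c).

Lemma exshift (w : R) : exists c : rat, 0 < w + ratr c.
Proof.
have : - w < - w + 1 by lra.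
move=> /rat_in_itvoo [c]; rewrite in_itv /= => /andP [h _].
by exists c; lra.
Qed.

Lemma P_excl {w} : P1 w -> P2 w -> False.
Proof.
move=> [kw [c h1]] [_ [d h2]]; have [_ p] := H1K h1.
exact: (disj _ h1 (shift2 kw h2 p)).
Qed.

Lemma P_tot {w} : K w -> P1 w \/ P2 w.
Proof.
move=> kw; have [c pc] := exshift w.
by case: (classify _ (KD kw (Kq c)) pc) => h; [left|right]; split => //; exists c.
Qed.

Lemma P2_add {u v} : P2 u -> P2 v -> P2 (u + v).
Proof.
move=> [ku [c hu]] [kv [d hv]]; split; first exact: KD.
exists (c + d); rewrite rmorphD /=.
have -> : u + v + (ratr c + ratr d) = (u + ratr c) + (v + ratr d) by ring.
exact: H2D.
Qed.

Lemma P1_add {u v} : P1 u -> P1 v -> P1 (u + v).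
Proof.
move=> [ku [c hu]] [kv [d hv]]; split; first exact: KD.
exists (c + d); rewrite rmorphD /=.
have -> : u + v + (ratr c + ratr d) = (u + ratr c) + (v + ratr d) by ring.
exact: H1D.
Qed.

Lemma P2_scale {u} {q : rat} : P2 u -> 0 < q -> P2 (ratr q * u).
Proof.
move=> [ku [c hu]] q0; split; first by apply: KM => //; exact: Kq.
exists (q * c); rewrite rmorphM /=.
have -> : ratr q * u + ratr q * ratr c = ratr q * (u + ratr c) by ring.
exact: scale2.
Qed.

Lemma P1_scale {u} {q : rat} : P1 u -> 0 < q -> P1 (ratr q * u).
Proof.
move=> [ku [c hu]] q0; split; first by apply: KM => //; exact: Kq.
exists (q * c); rewrite rmorphM /=.
have -> : ratr q * u + ratr q * ratr c = ratr q * (u + ratr c) by ring.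
exact: scale1.
Qed.

Lemma P2_shift {u} (r : rat) : P2 u -> P2 (u + ratr r).
Proof.
move=> [ku [c hu]]; split; first by apply: KD => //; exact: Kq.
exists (c - r); rewrite rmorphB /=.
by have -> : u + ratr r + (ratr c - ratr r) = u + ratr c by ring.
Qed.

Lemma P1_shift {u} (r : rat) : P1 u -> P1 (u + ratr r).
Proof.
move=> [ku [c hu]]; split; first by apply: KD => //; exact: Kq.
exists (c - r); rewrite rmorphB /=.
by have -> : u + ratr r + (ratr c - ratr r) = u + ratr c by ring.
Qed.

Lemma H2P2 {u} : H2 u -> P2 u.
Proof. by move=> h; split; [exact: (H2K h).1 | exists 0; rewrite rmorph0 addr0]. Qed.

Lemma H1P1 {u} : H1 u -> P1 u.
Proof. by move=> h; split; [exact: (H1K h).1 | exists 0; rewrite rmorph0 addr0]. Qed.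

Lemma P1_rat (r : rat) : P1 (ratr r).
Proof.
split; first exact: Kq.
exists (1 - r); rewrite rmorphB rmorph1 /=.
by have -> : ratr r + (1 - ratr r) = 1 :> R by ring.
Qed.

Lemma P1_neg {u} : H2 u -> P1 (- u).
Proof.
move=> h2; have [ku u0] := H2K h2.
have : u < u + 1 by lra.
move=> /rat_in_itvoo [c]; rewrite in_itv /= => /andP [h _].
split; first exact: KN.
by exists c; rewrite addrC; exact: R4.
Qed.

Lemma P0 : P2 0 -> False.
Proof. by apply: P_excl; have := P1_rat 0; rewrite rmorph0. Qed.


Variable x : R.
Hypothesis Hx : H2 x.

Lemma Pos m : forall b : rat, ratr b < m.+1%:R * x ^+ m -> P2 (x ^+ m.+1 - ratr b * x).
Proof.
have [kx x0] := H2K Hx.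
elim: m => [|m IH] b hb.
  rewrite expr0 mulr1 mulr1n in hb.
  have : H2 (ratr (1 - b) * x) by apply: scale2 => //; rewrite subr_gt0 -(ltr_rat R) rmorph1.
  move/H2P2; rewrite rmorphB rmorph1 /= expr1.
  have -> : (1 - ratr b) * x = x - ratr b * x by ring.
  by [].
have [u hu] : exists u, u = x ^+ m.+1 by eexists.
have [M hM] : exists M, M = m.+1%:R * x ^+ m by eexists.
have u2 : H2 u by rewrite hu; exact: H2X.
have u0 : 0 < u := (H2K u2).2.
have M0 : 0 < M by rewrite hM mulr_gt0 ?ltr0n ?exprn_gt0.
have xM : x * M = m.+1%:R * u by rewrite hM hu exprS; ring.
have Su : m.+2%:R * u = m.+1%:R * u + u by rewrite -addn1 natrD mulrDl mul1r.
rewrite -hu in hb.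
have [d hd] : exists d, d = m.+2%:R * u - ratr b by eexists.
have d0 : 0 < d by rewrite hd subr_gt0.
have e0 : 0 < d / (2 * M) by rewrite divr_gt0 // mulr_gt0.
have [c hc] : exists c : rat, Num.max 0 (x - d / (2 * M)) < ratr c < x.
  have : Num.max 0 (x - d / (2 * M)) < x by rewrite gt_max x0 /=; lra.
  by move/rat_in_itvoo => [c]; rewrite in_itv /= => hc; exists c.
move: hc; rewrite gt_max => /andP [/andP [c0 cx1] cx].
have [c' hc'] : exists c' : rat, Num.max 0 (u - d / 2) < ratr c' < u.
  have : Num.max 0 (u - d / 2) < u by rewrite gt_max u0 /=; lra.
  by move/rat_in_itvoo => [c']; rewrite in_itv /= => hc'; exists c'.
move: hc'; rewrite gt_max => /andP [/andP [c'0 cu1] cu].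
have c0q : 0 < c by rewrite -(ltr0q R).
have c'0q : 0 < c' by rewrite -(ltr0q R).
have cn : ratr c != 0 :> R by rewrite lt0r_neq0.
have hb' : ratr ((b - c') / c) < M.
  rewrite fmorph_div rmorphB /= ltr_pdivrMr //.
  have h1 : (x - d / (2 * M)) * M < ratr c * M by rewrite ltr_pM2r.
  have h2 : (x - d / (2 * M)) * M = x * M - d / 2.
    by field; rewrite lt0r_neq0.
  lra.
have := IH ((b - c') / c); rewrite -hM -hu => /(_ hb') P.
have h1 : H2 (x - ratr c) := R2 Hx c0q cx.
have h2 : H2 (u - ratr c') := R2 u2 c'0q cu.
have := P2_add (P2_shift (- (c * c')) (H2P2 (H2M h1 h2))) (P2_scale P c0q).
suff -> : (x - ratr c) * (u - ratr c') + ratr (- (c * c')) +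
  ratr c * (u - ratr ((b - c') / c) * x) = x ^+ m.+2 - ratr b * x by [].
rewrite rmorphN rmorphM fmorph_div rmorphB /= exprS -hu.
by field.
Qed.

Lemma Neg m : forall b : rat, m.+1%:R * x ^+ m < ratr b -> P1 (x ^+ m.+1 - ratr b * x).
Proof.
have [kx x0] := H2K Hx.
elim: m => [|m IH] b hb.
  rewrite expr0 mulr1 mulr1n in hb.
  have : H2 (ratr (b - 1) * x) by apply: scale2 => //; rewrite subr_gt0 -(ltr_rat R) rmorph1.
  move/P1_neg; rewrite rmorphB rmorph1 /= expr1.
  have -> : - ((ratr b - 1) * x) = x - ratr b * x by ring.
  by [].
have [u hu] : exists u, u = x ^+ m.+1 by eexists.
have [M hM] : exists M, M = m.+1%:R * x ^+ m by eexists.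
have u2 : H2 u by rewrite hu; exact: H2X.
have u0 : 0 < u := (H2K u2).2.
have M0 : 0 < M by rewrite hM mulr_gt0 ?ltr0n ?exprn_gt0.
have xM : x * M = m.+1%:R * u by rewrite hM hu exprS; ring.
have Su : m.+2%:R * u = m.+1%:R * u + u by rewrite -addn1 natrD mulrDl mul1r.
rewrite -hu in hb.
have [d hd] : exists d, d = ratr b - m.+2%:R * u by eexists.
have d0 : 0 < d by rewrite hd subr_gt0.
have e0 : 0 < d / (2 * M) by rewrite divr_gt0 // mulr_gt0.
have [c hc] : exists c : rat, x < ratr c < x + d / (2 * M).
  have : x < x + d / (2 * M) by lra.
  by move/rat_in_itvoo => [c]; rewrite in_itv /= => hc; exists c.
move: hc => /andP [cx cx1].
have [c' hc'] : exists c' : rat, u < ratr c' < u + d / 2.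
  have : u < u + d / 2 by lra.
  by move/rat_in_itvoo => [c']; rewrite in_itv /= => hc'; exists c'.
move: hc' => /andP [cu cu1].
have c0q : 0 < c by rewrite -(ltr0q R); lra.
have cn : ratr c != 0 :> R by rewrite lt0r_neq0 // ltr0q.
have hb' : M < ratr ((b - c') / c).
  rewrite fmorph_div rmorphB /= ltr_pdivlMr ?ltr0q //.
  have h1 : ratr c * M < (x + d / (2 * M)) * M by rewrite ltr_pM2r.
  have h2 : (x + d / (2 * M)) * M = x * M + d / 2.
    by field; rewrite lt0r_neq0.
  lra.
have := IH ((b - c') / c); rewrite -hM -hu => /(_ hb') P.
have h1 : H1 (ratr c - x) := R4 Hx cx.
have h2 : H1 (ratr c' - u) := R4 u2 cu.
have := P1_add (P1_shift (- (c * c')) (H1P1 (H1M h1 h2))) (P1_scale P c0q).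
suff -> : (ratr c - x) * (ratr c' - u) + ratr (- (c * c')) +
  ratr c * (u - ratr ((b - c') / c) * x) = x ^+ m.+2 - ratr b * x by [].
rewrite rmorphN rmorphM fmorph_div rmorphB /= exprS -hu.
by field.
Qed.

Lemma Neg' m (b : rat) : m.+1%:R * x ^+ m < ratr b -> P2 (ratr b * x - x ^+ m.+1).
Proof.
move=> hb; have [kx x0] := H2K Hx.
have kw : K (ratr b * x - x ^+ m.+1) by apply: KB; [apply: KM => //; exact: Kq | exact: KX].
case: (P_tot kw) => // h1; exfalso.
have [b'' hb''] := rat_in_itvoo hb.
move: hb''; rewrite in_itv /= => /andP [l r].
have := P1_add h1 (Neg m b'' l).
have : H2 (ratr (b - b'') * x).
  by apply: scale2 => //; rewrite subr_gt0 -(ltr_rat R).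
move=> /H2P2 h2 h3; apply: (P_excl _ h2).
suff -> : ratr (b - b'') * x = ratr b * x - x ^+ m.+1 + (x ^+ m.+1 - ratr b'' * x) by [].
by rewrite rmorphB /=; ring.
Qed.

Lemma Mono k (a g : rat) : ratr g < ratr a * k%:R * x ^+ k.-1 ->
  P2 (ratr a * x ^+ k - ratr g * x).
Proof.
have [kx x0] := H2K Hx.
have neg : forall g' : rat, (ratr g' : R) < 0 -> forall a' : rat, P2 (ratr a' - ratr g' * x).
  move=> g' hg a'; have := P2_shift a' (H2P2 (scale2 Hx (_ : 0 < - g'))).
  rewrite rmorphN /=; have -> : - ratr g' * x + ratr a' = ratr a' - ratr g' * x by ring.
  by apply; rewrite oppr_gt0 -(ltrq0 R).
case: k => [|m] hg.
  rewrite mulr0n mulr0 mul0r in hg.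
  by rewrite expr0 mulr1; apply: neg.
have Mp : 0 < m.+1%:R * x ^+ m :> R by rewrite mulr_gt0 ?ltr0n ?exprn_gt0.
rewrite /= -mulrA in hg.
case: (ltgtP a 0) => [an|ap|a0].
- have an' : ratr a < 0 :> R by rewrite ltrq0.
  have : m.+1%:R * x ^+ m < ratr (g / a).
    by rewrite fmorph_div /= ltr_ndivlMr // mulrC.
  move/Neg' => P; have := P2_scale P (_ : 0 < - a).
  rewrite oppr_gt0 => /(_ an).
  suff -> : ratr (- a) * (ratr (g / a) * x - x ^+ m.+1) = ratr a * x ^+ m.+1 - ratr g * x by [].
  rewrite rmorphN fmorph_div /=; field; exact: ltr0_neq0.
- have ap' : 0 < ratr a :> R by rewrite ltr0q.
  have : ratr (g / a) < m.+1%:R * x ^+ m.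
    by rewrite fmorph_div /= ltr_pdivrMr // mulrC.
  move/Pos => P; have := P2_scale P ap.
  suff -> : ratr a * (x ^+ m.+1 - ratr (g / a) * x) = ratr a * x ^+ m.+1 - ratr g * x by [].
  rewrite fmorph_div /=; field; exact: lt0r_neq0.
- have ra : (ratr a : R) = 0 by apply/eqP; rewrite fmorph_eq0 a0.
  rewrite ra mul0r in hg; rewrite ra mul0r.
  by have := neg g hg 0; rewrite rmorph0.
Qed.

Lemma Sum n (a : nat -> rat) (g : rat) :
  ratr g < \sum_(i < n) ratr (a i) * i%:R * x ^+ i.-1 ->
  P2 (\sum_(i < n) ratr (a i) * x ^+ i - ratr g * x).
Proof.
have [kx x0] := H2K Hx.
elim: n g => [|n IH] g hg.
  rewrite !big_ord0 in hg *.
  have := H2P2 (scale2 Hx (_ : 0 < - g)); rewrite oppr_gt0 -(ltrq0 R) => /(_ hg).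
  by rewrite rmorphN /= mulNr add0r.
rewrite !big_ord_recr /= in hg *.
have : ratr g - ratr (a n) * n%:R * x ^+ n.-1 <
  \sum_(i < n) ratr (a i) * i%:R * x ^+ i.-1 by lra.
move/rat_in_itvoo => [al]; rewrite in_itv /= => /andP [l r].
have h1 := IH al r.
have h2 : P2 (ratr (a n) * x ^+ n - ratr (g - al) * x).
  by apply: Mono; rewrite rmorphB /=; lra.
have := P2_add h1 h2.
suff -> : \sum_(i < n) ratr (a i) * x ^+ i - ratr al * x +
    (ratr (a n) * x ^+ n - ratr (g - al) * x) =
    \sum_(i < n) ratr (a i) * x ^+ i + ratr (a n) * x ^+ n - ratr g * x by [].
by rewrite rmorphB /=; ring.
Qed.

Lemma T_final : False.
Proof.
have [kx x0] := H2K Hx.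
have [a [n [_ [_ [e d]]]]] := @alg_rel R x (lt0r_neq0 x0) (Halg _ kx).
case: (ltgtP (\sum_(i < n) ratr (a i) * i%:R * x ^+ i.-1) 0) => [dn|dp|d0];
  last by rewrite d0 eqxx in d.
- have := Sum n (fun i => - a i) 0.
  have -> : \sum_(i < n) ratr (- a i) * x ^+ i = 0.
    transitivity (- \sum_(i < n) ratr (a i) * x ^+ i); last by rewrite e oppr0.
    by rewrite -sumrN; apply: eq_bigr => i _; rewrite rmorphN /= mulNr.
  have -> : \sum_(i < n) ratr (- a i) * i%:R * x ^+ i.-1 =
     - \sum_(i < n) ratr (a i) * i%:R * x ^+ i.-1.
    by rewrite -sumrN; apply: eq_bigr => i _; rewrite rmorphN /= !mulNr.
  rewrite rmorph0 mul0r subr0 oppr_gt0 => /(_ dn); exact: P0.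
- have := Sum n a 0; rewrite e rmorph0 mul0r subr0 => /(_ dp); exact: P0.
Qed.

End TCase.

Lemma main_contra : (exists x, H2 x) -> False.
Proof.
move=> [x Hx].
case: (classic (exists h, H2 h /\ H1 (1 + h))) => [[h [h2 h1]]|nS].
  exact: (S_final _ h2 h1).
apply: (T_final _ _ Hx) => h h2.
have [kh h0] := H2K h2.
case: (classify _ (KD K1 kh) (addr_gt0 ltr01 h0)) => // h1.
by exfalso; apply: nS; exists h.
Qed.

End Main.

Theorem corollary6p2 (R : realType) (K : R -> Prop)
  (HK : is_subfield K) (Halg : forall x, K x -> algebraic_over_Q x) :
  ~ exists H1 H2 : R -> Prop,
      (exists x, H1 x) /\ (exists x, H2 x) /\
      (forall x, H1 x -> H2 x -> False) /\
      (forall x, pos_part K x <-> (H1 x \/ H2 x)) /\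
      semiring_closed_set H1 /\ semiring_closed_set H2.
Proof.
move=> [H1 [H2 [[x1 hx1] [[x2 hx2] [disj [cover [sc1 sc2]]]]]]].
have k1 : pos_part K 1 by split; [case: HK => _ [] | exact: ltr01].
case: (proj1 (cover 1) k1) => o.
  exact: (main_contra _ _ HK _ _ disj cover sc1 sc2 o Halg (ex_intro _ x2 hx2)).
apply: (main_contra _ _ HK H2 H1 _ _ sc2 sc1 o Halg (ex_intro _ x1 hx1)).
  by move=> x a b; exact: disj b a.
by move=> x; rewrite cover; tauto.
Qed.
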